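(* Let $p=\tfrac12$, $\mu=\mu_{1/2}$, and set $d_0=E_0$, $d_n=E_n-E_{n-1}$ for $n\ge1$. Then for every $m\ge0$, $$K_m=(2-2^{-m})d_0+\sum_{n=1}^m2^{-(n-1)}\big(1-2^{-(m-n+1)}\big)d_n.$$ In particular each subspace $\mathcal D_0=E_0L^2(\mu)=\mathrm{span}\{\phi\}$, $\mathcal D_n=d_nL^2(\mu)$ ($n\ge1$) is $K_m$-invariant, $K_m$ acts on $\mathcal D_n$ as multiplication by $\lambda_{n,m}$, where $\lambda_{0,m}=2-2^{-m}$ and $\lambda_{n,m}=2^{-(n-1)}(1-2^{-(m-n+1)})$ for $1\le n\le m$, and $K_m$ vanishes on $\mathcal D_n$ for $n\ge m+1$.
   Context: Let $S_0(x)=x/3$, $S_2(x)=(x+2)/3$ on $[0,1]$ and let $C$ be the middle-third Cantor set. $\mu=\mu_{1/2}$ is the unique Borel probability measure on $[0,1]$ with $\mu=\frac12\mu\circ S_0^{-1}+\frac12\mu\circ S_2^{-1}$. For words $w\in\{0,2\}^n$, $S_w=S_{w_1}\circ\cdots\circ S_{w_n}$, $C_w=S_w(C)$. $\phi=1_C$. Inner product $\langle f,g\rangle=\int\overline fg\,d\mu$. $K_mf=\sum_{|u|\le m}\langle1_{C_u},f\rangle1_{C_u}$, and $E_n$ is the conditional expectation onto the $\sigma$-algebra generated by $\{C_w:|w|=n\}$. *)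

(* Defs.v *)
From HB Require Import structures.
From mathcomp Require Import all_boot all_order all_algebra.
From mathcomp Require Import all_classical all_reals all_analysis.
From mathcomp Require Import complex.
Set Implicit Arguments. Unset Strict Implicit. Unset Printing Implicit Defensive.
Import Order.TTheory GRing.Theory Num.Theory.
Local Open Scope ring_scope.
Local Open Scope classical_set_scope.

Section CantorDefs.
Variable R : realType.

(* The two contractions; the letter [false] codes 0, [true] codes 2. *)
Definition S0 (x : R) : R := x / 3.
Definition S2 (x : R) : R := (x + 2) / 3.
Definition Sb (b : bool) : R -> R := if b then S2 else S0.

Definition Sw (w : seq bool) : R -> R := foldr (fun b g => Sb b \o g) id w.

Definition cantor : set R :=
  [set x | forall n, exists t : n.-tuple bool,
      (Sw (tval t) @` [set y : R | 0 <= y <= 1]) x].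

Definition Ccyl (w : seq bool) : set R := Sw w @` cantor.

Definition phi : R -> R[i] := \1_cantor.

Definition self_similar (mu : probability R R) : Prop :=
  forall A : set R, measurable A ->
    mu A = ((1/2)%:E * mu (S0 @^-1` A) + (1/2)%:E * mu (S2 @^-1` A))%E.

Definition cmeas (G : set (set R)) (f : R -> R[i]) : Prop :=
  forall B : set R, measurable B ->
    G ((fun x => complex.Re (f x)) @^-1` B) /\ G ((fun x => complex.Im (f x)) @^-1` B).

Definition L2 (mu : probability R R) (f : R -> R[i]) : Prop :=
  cmeas measurable f /\
  mu.-integrable setT (fun x => (complex.Re (f x) ^+ 2 + complex.Im (f x) ^+ 2)%:E).

Definition cint (mu : probability R R) (A : set R) (f : R -> R[i]) : R[i] :=
  Complex (Rintegral mu A (fun x => complex.Re (f x))) (Rintegral mu A (fun x => complex.Im (f x))).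

Definition inner (mu : probability R R) (f g : R -> R[i]) : R[i] :=
  cint mu setT (fun x => conjc (f x) * g x).

Definition Kop (mu : probability R R) (m : nat) (f : R -> R[i]) : R -> R[i] :=
  fun x => \sum_(k < m.+1) \sum_(t : k.-tuple bool)
             inner mu (\1_(Ccyl (tval t))) f * \1_(Ccyl (tval t)) x.

Definition Gsig (n : nat) : set (set R) :=
  <<s range (fun t : n.-tuple bool => Ccyl (tval t)) >>.

Definition is_condexp (mu : probability R R) (G : set (set R))
    (f g : R -> R[i]) : Prop :=
  [/\ cmeas G g,
      mu.-integrable setT (fun x => (complex.Re (g x))%:E),
      mu.-integrable setT (fun x => (complex.Im (g x))%:E) &
      forall A, G A -> cint mu A g = cint mu A f].

Definition is_dn (mu : probability R R) (n : nat) (g h : R -> R[i]) : Prop :=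
  exists e1 e0 : R -> R[i],
    is_condexp mu (Gsig n) g e1 /\
    if n is 0 then {ae mu, forall x, h x = e1 x}
    else is_condexp mu (Gsig n.-1) g e0 /\ {ae mu, forall x, h x = e1 x - e0 x}.

Definition inD (mu : probability R R) (n : nat) (f : R -> R[i]) : Prop :=
  L2 mu f /\ exists g, L2 mu g /\ is_dn mu n g f.

Definition lambda (n m : nat) : R :=
  if n == 0%N then 2 - 2 ^- m
  else if (n <= m)%N then 2 ^- n.-1 * (1 - 2 ^- (m - n).+1) else 0.

End CantorDefs.

(* Main.v *)
Set Warnings "-all".
Require Import Defs.
From HB Require Import structures.
From mathcomp Require Import all_boot all_order all_algebra.
From mathcomp Require Import all_classical all_reals all_analysis.
From mathcomp Require Import complex.
From mathcomp.algebra_tactics Require Import ring lra.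
From mathcomp Require Import zify.
Import Order.TTheory GRing.Theory Num.Theory.
Local Open Scope ring_scope.
Local Open Scope classical_set_scope.
Set Implicit Arguments. Unset Strict Implicit. Unset Printing Implicit Defensive.
Section CantorComb.
Variable R : realType.
Local Notation I01 := [set y : R | 0 <= y <= 1].

Definition Sbinv (b : bool) (y : R) : R := 3 * y - (if b then 2 else 0).
Definition Iw (w : seq bool) : R -> R := foldr (fun b g => g \o Sbinv b) id w.

Lemma SbK b : cancel (@Sb R b) (Sbinv b).
Proof. by move=> x; case: b; rewrite /Sbinv /Sb /S0 /S2 /=; lra. Qed.

Lemma SbinvK b : cancel (Sbinv b) (@Sb R b).
Proof. by move=> x; case: b; rewrite /Sbinv /Sb /S0 /S2 /=; lra. Qed.

Lemma SwK w : cancel (@Sw R w) (Iw w).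
Proof. by elim: w => //= b w IH x; rewrite /comp SbK IH. Qed.

Lemma IwK w : cancel (Iw w) (@Sw R w).
Proof. by elim: w => //= b w IH x; rewrite /comp IH SbinvK. Qed.

Lemma image_Sw w (A : set R) : Sw w @` A = Iw w @^-1` A.
Proof.
apply/seteqP; split => [y [x Ax <-]|y Ay]; first by rewrite /preimage /= SwK.
by exists (Iw w y) => //; exact: IwK.
Qed.

Lemma Sw_cat (u v : seq bool) : @Sw R (u ++ v) = Sw u \o Sw v.
Proof. by elim: u => //= b u IH; rewrite IH. Qed.

Lemma Sb_I01 b (x : R) : 0 <= x <= 1 -> 0 <= Sb b x <= 1.
Proof. by case: b; rewrite /Sb /S0 /S2 => /andP[? ?]; apply/andP; split; lra. Qed.

Lemma Sw_I01 w (x : R) : 0 <= x <= 1 -> 0 <= Sw w x <= 1.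
Proof. by elim: w => //= b w IH /IH; exact: Sb_I01. Qed.

Lemma Sb_sep b b' (x y : R) : 0 <= x <= 1 -> 0 <= y <= 1 -> Sb b x = Sb b' y ->
  b = b' /\ x = y.
Proof.
move=> /andP[? ?] /andP[? ?]; case: b; case: b'; rewrite /Sb /S0 /S2 => h;
  split => //; lra.
Qed.

Lemma tuple0_nil (t : 0.-tuple bool) : tval t = [::].
Proof. by case: t => -[]. Qed.

Lemma cantor_I01 (x : R) : cantor x -> 0 <= x <= 1.
Proof. by move=> /(_ 0%N) [t]; rewrite tuple0_nil => -[y Iy <-]. Qed.

Lemma cantorSb b (x : R) : cantor x -> cantor (Sb b x).
Proof.
move=> Cx [|n].
  exists [tuple]; exists (Sb b x) => //; exact/Sb_I01/cantor_I01.
have [t [y Iy <-]] := Cx n.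
by exists [tuple of b :: t]; exists y.
Qed.

Lemma cantor_split (x : R) : cantor x -> exists b y, cantor y /\ x = Sb b y.
Proof.
move=> Cx; have [t [y0 Iy0 ey0]] := Cx 1%N.
move: t ey0; case/tupleP => b t0; rewrite /= tuple0_nil /= => ey0.
exists b, y0; split => //.
move=> n; have [t' [z Iz ez]] := Cx n.+1.
move: t' ez; case/tupleP => b' t'' /= ez.
have [eb ey] : b' = b /\ Sw t'' z = y0.
  by apply: Sb_sep; [exact: Sw_I01|by []|rewrite ez].
by exists t''; exists z.
Qed.

Lemma Ccyl_nil : @Ccyl R [::] = @cantor R.
Proof. by rewrite /Ccyl /= image_id. Qed.

Lemma Ccyl_cons b w : @Ccyl R (b :: w) = Sb b @` Ccyl w.
Proof. by rewrite /Ccyl /= image_comp. Qed.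

Lemma Ccyl_cantor w : @Ccyl R w `<=` @cantor R.
Proof.
elim: w => [|b w IH]; first by rewrite Ccyl_nil.
by rewrite Ccyl_cons => x [y /IH Cy <-]; exact: cantorSb.
Qed.

Lemma Ccyl_I01 w (x : R) : Ccyl w x -> 0 <= x <= 1.
Proof. by move/Ccyl_cantor/cantor_I01. Qed.

Lemma cantor_cover n (x : R) : cantor x -> exists t : n.-tuple bool, Ccyl t x.
Proof.
elim: n x => [|n IH] x Cx; first by exists [tuple]; rewrite Ccyl_nil.
have [b [y [Cy ->]]] := cantor_split Cx.
have [t Cty] := IH _ Cy.
by exists [tuple of b :: t]; rewrite /= Ccyl_cons; exists y.
Qed.

Lemma Ccyl_disj (w v : seq bool) (x : R) : size w = size v ->
  Ccyl w x -> Ccyl v x -> w = v.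
Proof.
elim: w v x => [|b w IH] [|b' v] //= x [] /IH {}IH.
rewrite !Ccyl_cons => -[y Cy <-] [z Cz] ez.
have [eb eyz] := Sb_sep (Ccyl_I01 Cz) (Ccyl_I01 Cy) ez.
by rewrite eb (IH y) //; rewrite -eyz.
Qed.

Lemma Ccyl_catS (u v : seq bool) : @Ccyl R (u ++ v) `<=` Ccyl u.
Proof.
rewrite /Ccyl Sw_cat -image_comp => x [y Cy <-]; exists y => //.
exact: (Ccyl_cantor Cy).
Qed.

Lemma Ccyl_cat_cover (u : seq bool) k (x : R) : Ccyl u x ->
  exists v : k.-tuple bool, Ccyl (u ++ v) x.
Proof.
move=> [y Cy <-]; have [v [z Cz <-]] := cantor_cover k Cy.
by exists v; rewrite /Ccyl Sw_cat -image_comp; exists (Sw v z) => //; exists z.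
Qed.

Lemma Ccyl_rcons (u : seq bool) : @Ccyl R u = Ccyl (rcons u false) `|` Ccyl (rcons u true).
Proof.
apply/seteqP; split => x.
  move=> Cx; have [v Cv] := Ccyl_cat_cover 1 Cx.
  move: v Cv; case/tupleP => b v0; rewrite /= tuple0_nil -!cats1.
  by case: b => ?; [right|left].
by rewrite -!cats1 => -[] /Ccyl_catS.
Qed.

Lemma Ccyl_prefix (s : seq bool) n : (n <= size s)%N ->
  exists t : n.-tuple bool, @Ccyl R s `<=` Ccyl t.
Proof.
move=> hn.
have sz : size (take n s) == n by rewrite size_take; case: ltnP => // h; apply/eqP/anti_leq/andP.
exists (Tuple sz) => /=; rewrite -{1}(cat_take_drop n s); exact: Ccyl_catS.
Qed.

Lemma cantor0 : cantor (0 : R).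
Proof.
move=> n; exists (nseq_tuple n false); exists 0; first by rewrite /= lexx ler01.
by elim: n => //= n ->; rewrite /Sb /S0 mul0r.
Qed.

End CantorComb.
Section CantorMeasure.
Variable R : realType.
Local Notation I01 := [set y : R | 0 <= y <= 1].

Lemma I01_itv : I01 = `[(0:R), 1]%classic.
Proof. by apply/seteqP; split => x /=; rewrite in_itv. Qed.

Lemma measurable_I01 : measurable I01.
Proof. rewrite I01_itv; exact: measurable_itv. Qed.

Lemma measurable_Sbinv b : measurable_fun setT (@Sbinv R b).
Proof.
rewrite /Sbinv; apply: measurable_realfun.measurable_funB; last exact: measurable_cst.
apply: measurable_realfun.measurable_funM; [exact: measurable_cst|exact: measurable_id].
Qed.

Lemma measurable_Sbfun b : measurable_fun setT (@Sb R b).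
Proof.
case: b; rewrite /Sb /S0 /S2; apply: measurable_realfun.measurable_funM; try exact: measurable_cst.
  apply: measurable_realfun.measurable_funD; [exact: measurable_id|exact: measurable_cst].
exact: measurable_id.
Qed.

Lemma measurable_Iw w : measurable_fun setT (@Iw R w).
Proof.
elim: w => [|b w IH] /=; first exact: measurable_id.
exact: measurableT_comp IH (measurable_Sbinv b).
Qed.

Lemma measurable_imS w (A : set R) : measurable A -> measurable (Sw w @` A).
Proof.
rewrite image_Sw => mA; have := measurable_Iw w measurableT mA; by rewrite setTI.
Qed.

Lemma measurable_preSb b (A : set R) : measurable A -> measurable (Sb b @^-1` A).
Proof. move=> mA; have := measurable_Sbfun b measurableT mA; by rewrite setTI. Qed.

Definition Vn n (A : set R) := [set x | exists t : n.-tuple bool, (Sw t @` A) x].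

Lemma V0 (A : set R) : Vn 0 A = A.
Proof.
apply/seteqP; split => x.
  by move=> [t]; rewrite tuple0_nil => -[y Ay <-].
by move=> Ax; exists [tuple]; exists x.
Qed.

Lemma VS n (A : set R) : Vn n.+1 A = Sb false @` Vn n A `|` Sb true @` Vn n A.
Proof.
apply/seteqP; split => x.
  move=> [t]; case/tupleP: t => b t /= [y Ay <-].
  by case: b; [right|left]; exists (Sw t y) => //; exists t; exists y.
by move=> [] [_ [t [y Ay <-]] <-]; [exists [tuple of false :: t]|exists [tuple of true :: t]];
  exists y.
Qed.

Lemma measurable_Sb b (A : set R) : measurable A -> measurable (Sb b @` A).
Proof. exact: (measurable_imS [:: b]). Qed.

Lemma measurable_V n (A : set R) : measurable A -> measurable (Vn n A).
Proof.
move=> mA; elim: n => [|n IH]; first by rewrite V0.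
by rewrite VS; apply: measurableU; apply: measurable_Sb.
Qed.

Lemma V_I01 n (A : set R) : A `<=` I01 -> Vn n A `<=` I01.
Proof. by move=> AI x [t [y /AI Ay <-]]; exact: Sw_I01. Qed.

Lemma cantor_bigcap : @cantor R = \bigcap_n Vn n I01.
Proof. by apply/seteqP; split => x Cx n; [move=> _; exact: Cx|exact: (Cx n I)]. Qed.

Lemma measurable_cantor : measurable (@cantor R).
Proof.
have h : measurable (\bigcap_n Vn n I01).
  apply: bigcap_measurableType => k _; exact: (measurable_V _ measurable_I01).
by move: h; rewrite -cantor_bigcap.
Qed.

Lemma measurable_Ccyl w : measurable (@Ccyl R w).
Proof. exact: measurable_imS measurable_cantor. Qed.

Variables (mu : probability R R) (hself : self_similar mu) (hsupp : mu I01 = 1%E).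

Lemma mu_notI01 : mu (~` I01) = 0%E.
Proof. by rewrite probability_setC ?hsupp ?subee //; exact: measurable_I01. Qed.

Lemma mu_Sb b (A : set R) : measurable A -> A `<=` I01 ->
  mu (Sb b @` A) = ((2^-1 : R)%:E * mu A)%E.
Proof.
move=> mA AI; rewrite hself; last exact: measurable_Sb.
have e1 c : Sb c @^-1` (Sb c @` A) = A.
  apply/seteqP; split => x /=; last by move=> Ax; exists x.
  by move=> [y Ay] /(can_inj (SbK c)) <-.
have e2 c : c != b -> mu (Sb c @^-1` (Sb b @` A)) = 0%E.
  move=> cb; apply: (subset_measure0 _ _ _ mu_notI01).
  - by apply: measurable_preSb; apply: measurable_Sb.
  - by apply: measurableC; apply: measurable_I01.
  move=> x /= [y Ay] eyx Ix; have [ebc _] := Sb_sep (AI _ Ay) Ix eyx.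
  by move: cb; rewrite ebc eqxx.
case: b e2 => e2.
  have -> : @S0 R @^-1` (Sb true @` A) = Sb false @^-1` (Sb true @` A) by [].
  have -> : @S2 R @^-1` (Sb true @` A) = Sb true @^-1` (Sb true @` A) by [].
  by rewrite e1 e2 // mule0 add0e div1r.
have -> : @S0 R @^-1` (Sb false @` A) = Sb false @^-1` (Sb false @` A) by [].
have -> : @S2 R @^-1` (Sb false @` A) = Sb true @^-1` (Sb false @` A) by [].
by rewrite e1 e2 // mule0 adde0 div1r.
Qed.

Lemma mu_V n (A : set R) : measurable A -> A `<=` I01 -> mu (Vn n A) = mu A.
Proof.
move=> mA AI; elim: n => [|n IH]; first by rewrite V0.
have mV := measurable_V n mA; have VI := V_I01 (n:=n) AI.
rewrite VS measureU; first last.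
- apply/seteqP; split => // x [[y Vy <-] [z Vz]] ez.
  by have [] := Sb_sep (VI _ Vz) (VI _ Vy) ez.
- exact: measurable_Sb.
- exact: measurable_Sb.
have h b : mu (Sb b @` Vn n A) = ((2^-1 : R)%:E * mu A)%E by rewrite mu_Sb // IH.
apply: eq_trans (congr2 (fun a b => (a + b)%E) (h false) (h true)) _.
rewrite -ge0_muleDl ?lee_fin ?invr_ge0 ?ler0n // -EFinD.
have -> : (2^-1 + 2^-1 : R) = 1 by lra.
by rewrite mul1e.
Qed.

Lemma mu_Sw w (A : set R) : measurable A -> A `<=` I01 ->
  mu (Sw w @` A) = (((2^-1 : R) ^+ size w)%:E * mu A)%E.
Proof.
move=> mA AI; elim: w => [|b w IH] /=; first by rewrite image_id expr0 mul1e.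
have -> : (Sb b \o Sw w) @` A = Sb b @` (Sw w @` A) by rewrite image_comp.
rewrite mu_Sb; first by rewrite IH muleA -EFinM exprS.
- exact: measurable_imS.
- by move=> x [y /AI Ay <-]; exact: Sw_I01.
Qed.

Lemma mu_notV n : mu (~` Vn n I01) = 0%E.
Proof.
rewrite probability_setC; last by apply: measurable_V; apply: measurable_I01.
by rewrite mu_V ?hsupp ?subee //; exact: measurable_I01.
Qed.

Lemma mu_notcantor : mu (~` (@cantor R)) = 0%E.
Proof.
have : mu.-negligible (\bigcup_n ~` Vn n I01).
  apply: negligible_bigcup => k; exists (~` Vn k I01); split => //.
  - by apply: measurableC; apply: measurable_V; apply: measurable_I01.
  - exact: mu_notV.
move=> [N [mN N0 sN]]; apply: (subset_measure0 _ mN _ N0).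
- by apply: measurableC; apply: measurable_cantor.
- move=> x ncx; apply: sN; rewrite cantor_bigcap in ncx.
  move: ncx => /= /existsNP [k /not_implyP [_ nk]]; by exists k.
Qed.

Lemma mu_cantor : mu (@cantor R) = 1%E.
Proof.
have := probability_setC mu (measurableC measurable_cantor).
by rewrite setCK mu_notcantor sube0.
Qed.

Lemma ae_cantor : {ae mu, forall x, @cantor R x}.
Proof.
exists (~` (@cantor R)); split => //.
- by apply: measurableC; apply: measurable_cantor.
- exact: mu_notcantor.
Qed.

Lemma mu_Ccyl w : mu (@Ccyl R w) = (((2^-1 : R) ^+ size w)%:E)%E.
Proof.
rewrite /Ccyl mu_Sw ?mu_cantor ?mule1 //; first exact: measurable_cantor.
by move=> x /cantor_I01.
Qed.

End CantorMeasure.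
Section GsigSec.
Variable R : realType.

Lemma sigma_setU (G : set (set R)) A B : sigma_algebra setT G -> G A -> G B -> G (A `|` B).
Proof.
move=> [_ _ hU] GA GB.
have -> : A `|` B = \bigcup_k (if k is 0%N then A else B).
  apply/seteqP; split => x.
    by case => h; [exists 0%N | exists 1%N].
  by move=> [[|k] _ h]; [left|right].
by apply: hU => -[|k].
Qed.

Lemma sigma_setC (G : set (set R)) A : sigma_algebra setT G -> G A -> G (~` A).
Proof. by move=> [_ hC _] /hC; rewrite setTD. Qed.

Lemma sigma_setT (G : set (set R)) : sigma_algebra setT G -> G setT.
Proof. by move=> hG; have := sigma_setC hG (let: And3 h _ _ := hG in h); rewrite setC0. Qed.

Lemma Gsig_sigma n : sigma_algebra setT (@Gsig R n).
Proof. exact: smallest_sigma_algebra. Qed.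

Lemma Gsig_meas n (A : set R) : Gsig n A -> measurable A.
Proof.
apply: smallest_sub; first exact: sigma_algebra_measurable.
by move=> _ [t _ <-]; exact: measurable_Ccyl.
Qed.

Lemma Gsig_cyl n (w : seq bool) : (size w <= n)%N -> @Gsig R n (Ccyl w).
Proof.
move=> hw; have [d ed] : exists d, (size w + d = n)%N by exists (n - size w)%N; lia.
elim: d w ed {hw} => [|d IH] w ed.
  have sz : size w == n by rewrite -ed addn0.
  move=> X [_ GX]; apply: GX; by exists (Tuple sz).
rewrite Ccyl_rcons; apply: (sigma_setU (@Gsig_sigma n)).
  by apply: IH; rewrite size_rcons -ed; lia.
by apply: IH; rewrite size_rcons -ed; lia.
Qed.

Lemma Gsig_const n (e : R -> R[i]) : cmeas (Gsig n) e ->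
  forall s : seq bool, (n <= size s)%N -> forall x y, Ccyl s x -> Ccyl s y -> e x = e y.
Proof.
move=> he s hs x y Cx Cy.
have [t st] := Ccyl_prefix R hs.
pose H := [set A : set R | forall u : n.-tuple bool, Ccyl u `<=` A \/ Ccyl u `&` A = set0].
have HG : Gsig n `<=` H.
  apply: smallest_sub.
  - split.
    + by move=> u; right; rewrite setI0.
    + move=> A HA u; case: (HA u) => h; [right|left].
        apply/seteqP; split => // z [Cz [_ nAz]]; exact: nAz (h _ Cz).
      move=> z Cz; split => // Az.
      by have : (Ccyl u `&` A) z by []; rewrite h.
    + move=> F HF u; case: (pselect (exists k, Ccyl u `<=` F k)) => [[k hk]|nk].
        by left => z /hk Fz; exists k.
      right; apply/seteqP; split => // z [Cz [k _ Fkz]]; case: (HF k u) => h.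
        by exfalso; apply: nk; exists k.
      by have : (Ccyl u `&` F k) z by []; rewrite h.
  - move=> _ [u' _ <-] u; case: (pselect (u = u')) => [->|neq]; [by left|right].
    apply/seteqP; split => // z [C1 C2]; apply: neq; apply: val_inj.
    by apply: (Ccyl_disj _ C1 C2); rewrite !size_tuple.
have key (h : R -> R) : (forall B, measurable B -> Gsig n (h @^-1` B)) -> h x = h y.
  move=> hm; case: (HG _ (hm _ (measurable_set1 (h x))) t).
    by move=> /(_ y (st _ Cy)) ->.
  move=> h0; have : (Ccyl t `&` (h @^-1` [set h x])) x by split => //; apply: st.
  by rewrite h0.
have h1 := key _ (fun B mB => (he B mB).1).
have h2 := key _ (fun B mB => (he B mB).2).
move: h1 h2; case: (e x) => a b; case: (e y) => c d /= -> ->.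
by [].
Qed.

Lemma cmeas_mfun (f : R -> R[i]) : cmeas measurable f ->
  measurable_fun setT (fun x => complex.Re (f x)) /\ measurable_fun setT (fun x => complex.Im (f x)).
Proof. by move=> h; split => _ B mB; rewrite setTI; [exact: (h B mB).1|exact: (h B mB).2]. Qed.

Lemma mfun_cmeas (f : R -> R[i]) :
  measurable_fun setT (fun x => complex.Re (f x)) -> measurable_fun setT (fun x => complex.Im (f x)) ->
  cmeas measurable f.
Proof.
move=> h1 h2 B mB; split.
  by have := h1 measurableT B mB; rewrite setTI.
by have := h2 measurableT B mB; rewrite setTI.
Qed.

Lemma cmeas_Gsig n (f : R -> R[i]) : cmeas (Gsig n) f -> cmeas measurable f.
Proof. by move=> h B mB; split; apply: Gsig_meas; [exact: (h B mB).1|exact: (h B mB).2]. Qed.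

End GsigSec.
Local Open Scope complex_scope.
Section Integ.
Variable R : realType.

Lemma Re_realM (r : R) (z : R[i]) : complex.Re (r%:C * z) = r * complex.Re z.
Proof.
case: z => a b; have -> : r%:C * Complex a b = Complex (r * a - 0 * b) (r * b + 0 * a) by [].
by rewrite /= mul0r subr0.
Qed.

Lemma Im_realM (r : R) (z : R[i]) : complex.Im (r%:C * z) = r * complex.Im z.
Proof.
case: z => a b; have -> : r%:C * Complex a b = Complex (r * a - 0 * b) (r * b + 0 * a) by [].
by rewrite /= mul0r addr0.
Qed.

Lemma realM_Complex (r a b : R) : r%:C * Complex a b = Complex (r * a) (r * b).
Proof.
have -> : r%:C * Complex a b = Complex (r * a - 0 * b) (r * b + 0 * a) by [].
by rewrite !mul0r subr0 addr0.
Qed.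

Lemma ReB (z w : R[i]) : complex.Re (z - w) = complex.Re z - complex.Re w.
Proof. by case: z => a b; case: w => c d. Qed.

Lemma ImB (z w : R[i]) : complex.Im (z - w) = complex.Im z - complex.Im w.
Proof. by case: z => a b; case: w => c d. Qed.

Lemma ReD (z w : R[i]) : complex.Re (z + w) = complex.Re z + complex.Re w.
Proof. by case: z => a b; case: w => c d. Qed.

Lemma ImD (z w : R[i]) : complex.Im (z + w) = complex.Im z + complex.Im w.
Proof. by case: z => a b; case: w => c d. Qed.

Lemma indicC (A : set R) x : (\1_A x : R[i]) = (\1_A x : R)%:C.
Proof. by rewrite !indicE; case: (x \in A). Qed.

Lemma norm_le_sq (a b : R) : `|a| <= `|1 + (a ^+ 2 + b ^+ 2)|.
Proof.
rewrite [X in _ <= X]ger0_norm; last by rewrite addr_ge0 ?ler01 ?addr_ge0 ?sqr_ge0.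
by case: (lerP 0 a) => ha; [rewrite ger0_norm|rewrite ltr0_norm]; nra.
Qed.

Variable mu : probability R R.

Lemma cint_indic (A : set R) (f : R -> R[i]) : inner mu (\1_A) f = cint mu A f.
Proof.
rewrite /inner /cint; congr Complex; rewrite [RHS]Rintegral_mkcond;
  apply: eq_Rintegral => x _; rewrite patchE indicE;
  case: (x \in A); rewrite ?mulr1n ?mulr0n ?conjc1 ?conjc0 ?mul1r ?mul0r //.
Qed.

Lemma cint_const (A : set R) (h : R -> R[i]) x0 : measurable A ->
  (forall y, A y -> h y = h x0) -> cint mu A h = (fine (mu A))%:C * h x0.
Proof.
move=> mA hc; rewrite /cint.
rewrite (@eq_Rintegral _ _ _ mu A (fun=> complex.Re (h x0))); last first.
  by move=> y; rewrite inE => Ay; rewrite hc.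
rewrite (@eq_Rintegral _ _ _ mu A (fun=> complex.Im (h x0)) (fun x => complex.Im (h x))); last first.
  by move=> y; rewrite inE => Ay; rewrite hc.
rewrite !Rintegral_cst //; case: (h x0) => a b /=.
by rewrite realM_Complex ![fine _ * _]mulrC.
Qed.

Lemma cint_ae (A : set R) (f g : R -> R[i]) : measurable A ->
  cmeas measurable f -> cmeas measurable g -> {ae mu, forall x, f x = g x} ->
  cint mu A f = cint mu A g.
Proof.
move=> mA hf hg hfg; have [f1 f2] := cmeas_mfun hf; have [g1 g2] := cmeas_mfun hg.
rewrite /cint /Rintegral; congr (Complex (fine _) (fine _)); apply: ae_eq_integral => //.
- apply/measurable_realfun.measurable_EFinP; exact: (measurable_funS measurableT).
- apply/measurable_realfun.measurable_EFinP; exact: (measurable_funS measurableT).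
- by apply: filterS hfg => x /= ->.
- apply/measurable_realfun.measurable_EFinP; exact: (measurable_funS measurableT).
- apply/measurable_realfun.measurable_EFinP; exact: (measurable_funS measurableT).
- by apply: filterS hfg => x /= ->.
Qed.

Lemma L2_int (f : R -> R[i]) : L2 mu f ->
  mu.-integrable setT (fun x => (complex.Re (f x))%:E) /\
  mu.-integrable setT (fun x => (complex.Im (f x))%:E).
Proof.
move=> [hm hi]; have [m1 m2] := cmeas_mfun hm.
have hI : mu.-integrable setT
    (fun x => (1 + (complex.Re (f x) ^+ 2 + complex.Im (f x) ^+ 2))%:E).
  have := integrableD measurableT (finite_measure_integrable_cst mu 1 measurableT) hi.
  by apply: eq_integrable => // x _.
split; apply: (le_integrable measurableT _ _ hI).
- exact: (proj2 (measurable_realfun.measurable_EFinP _ _)) m1.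
- by move=> x _ /=; rewrite lee_fin norm_le_sq.
- exact: (proj2 (measurable_realfun.measurable_EFinP _ _)) m2.
- by move=> x _ /=; rewrite lee_fin [_ ^+ 2 + _]addrC norm_le_sq.
Qed.

Lemma cintB (A : set R) (f g : R -> R[i]) : measurable A ->
  mu.-integrable setT (fun x => (complex.Re (f x))%:E) ->
  mu.-integrable setT (fun x => (complex.Im (f x))%:E) ->
  mu.-integrable setT (fun x => (complex.Re (g x))%:E) ->
  mu.-integrable setT (fun x => (complex.Im (g x))%:E) ->
  cint mu A (fun x => f x - g x) = cint mu A f - cint mu A g.
Proof.
move=> mA i1 i2 i3 i4; rewrite /cint.
have iS h : mu.-integrable setT (fun x => (h x : R)%:E) -> mu.-integrable A (EFin \o h).
  by move=> ih; apply: (integrableS measurableT mA) => //.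
rewrite (@eq_Rintegral _ _ _ mu A (fun x => complex.Re (f x) - complex.Re (g x))); last first.
  by move=> y _; rewrite ReB.
rewrite (@eq_Rintegral _ _ _ mu A (fun x => complex.Im (f x) - complex.Im (g x)) (fun x => complex.Im (f x - g x))); last first.
  by move=> y _; rewrite ImB.
by rewrite !RintegralB //; apply: iS.
Qed.

Lemma cintZ (A : set R) (r : R) (f : R -> R[i]) : measurable A ->
  mu.-integrable setT (fun x => (complex.Re (f x))%:E) ->
  mu.-integrable setT (fun x => (complex.Im (f x))%:E) ->
  cint mu A (fun x => r%:C * f x) = r%:C * cint mu A f.
Proof.
move=> mA i1 i2; rewrite /cint.
have iS h : mu.-integrable setT (fun x => (h x : R)%:E) -> mu.-integrable A (EFin \o h).
  by move=> ih; apply: (integrableS measurableT mA) => //.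
rewrite (@eq_Rintegral _ _ _ mu A (fun x => r * complex.Re (f x))); last first.
  by move=> y _; rewrite Re_realM.
rewrite (@eq_Rintegral _ _ _ mu A (fun x => r * complex.Im (f x)) (fun x => complex.Im (r%:C * f x))); last first.
  by move=> y _; rewrite Im_realM.
by rewrite !RintegralZl ?realM_Complex //; apply: iS.
Qed.

End Integ.
Section Algebra.
Variable R : realType.

Lemma lam_eq n m : \sum_(k < m.+1) (if (n <= k)%N then (2^-1 : R) ^+ k else 0) = lambda R n m.
Proof.
elim: m => [|m IH].
  rewrite big_ord1 /lambda /=; case: n => [|n] //=.
  by rewrite expr0 invr1; lra.
rewrite big_ord_recr /= IH /lambda; clear IH.
case: n => [|n] /=.
  rewrite -!exprVn exprS; lra.
have [hnm|hmn] := ltnP n m.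
- rewrite ltnS (ltnW hnm) subSS -(subnSK hnm) -!exprVn.
  have e2 : (2^-1 : R) ^+ m.+1 = 2^-1 * ((2^-1) ^+ n * (2^-1) ^+ (m - n.+1).+1).
    by rewrite -exprD exprS; congr (_ * _ ^+ _); lia.
  rewrite e2 [(2^-1 : R) ^+ (m - n.+1).+2]exprS.
  set a := (2^-1 : R) ^+ n; set b := (2^-1 : R) ^+ (m - n.+1).+1.
  by field.
rewrite /= add0r.
have [hnm'|hmn'] := ltnP n m.+1.
- have -> : n = m by lia.
  by rewrite subSS subnn -!exprVn exprS expr1; lra.
- by [].
Qed.

Lemma lam_step n m : lambda R n m.+1 =
  lambda R n m + (if (n <= m.+1)%N then (2^-1 : R) ^+ m.+1 else 0).
Proof. by rewrite -!lam_eq big_ord_recr. Qed.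

Lemma lam_over m : lambda R m.+1 m = 0.
Proof. by rewrite /lambda /= ltnn. Qed.

Lemma telescope_c m (a : nat -> R[i]) :
  a 0%N + \sum_(1 <= n < m.+1) (a n - a n.-1) = a m.
Proof.
elim: m => [|m IH]; first by rewrite big_geq // addr0.
by rewrite big_nat_recr //= addrA IH addrC subrK.
Qed.

Lemma main_identity m (a : nat -> R[i]) :
  \sum_(k < m.+1) ((2^-1 : R) ^+ k)%:C * a k =
  (lambda R 0 m)%:C * a 0%N + \sum_(1 <= n < m.+1) (lambda R n m)%:C * (a n - a n.-1).
Proof.
elim: m => [|m IH].
  by rewrite big_ord1 big_geq // addr0 /lambda /= expr0 invr1; congr (_ * _); congr (_%:C); lra.
rewrite big_ord_recr /= IH (lam_step 0 m) /=.
rewrite [in RHS]big_nat_recr //= (lam_step m.+1 m) lam_over add0r leqnn /=.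
rewrite [in RHS](@eq_big_nat _ _ _ 1 m.+1 _ (fun n => (lambda R n m)%:C * (a n - a n.-1) + ((2^-1 : R) ^+ m.+1)%:C * (a n - a n.-1))); last first.
  by move=> n /andP[h1 h2]; rewrite lam_step ltnW // rmorphD mulrDl.
rewrite big_split /= -mulr_sumr.
have := telescope_c m a; set X := \sum_(1 <= n < m.+1) (a n - a n.-1) => hX.
have -> : X = a m - a 0%N by rewrite -hX addrC addKr.
rewrite [(lambda R 0 m + _)%:C]rmorphD; ring.
Qed.

End Algebra.
Section Core.
Variable R : realType.
Variables (mu : probability R R) (hself : self_similar mu)
  (hsupp : mu [set x : R | 0 <= x <= 1] = 1%E).

Lemma condexp_meas G (g e : R -> R[i]) : is_condexp mu G g e -> cmeas G e.
Proof. by case. Qed.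

Lemma condexp_eq G (g e : R -> R[i]) A : is_condexp mu G g e -> G A -> cint mu A e = cint mu A g.
Proof. by case=> _ _ _ h; exact: h. Qed.

Lemma condexp_cyl n (g e : R -> R[i]) (w : seq bool) : is_condexp mu (Gsig n) g e ->
  (size w <= n)%N -> cint mu (Ccyl w) e = cint mu (Ccyl w) g.
Proof. by move=> he hw; apply: (condexp_eq he); exact: Gsig_cyl. Qed.

Lemma cint_Gconst n (e : R -> R[i]) (w : seq bool) x : cmeas (Gsig n) e ->
  (n <= size w)%N -> Ccyl w x ->
  cint mu (Ccyl w) e = ((2^-1 : R) ^+ size w)%:C * e x.
Proof.
move=> he hw Cx; rewrite (@cint_const _ mu _ _ x).
- by rewrite (mu_Ccyl hself hsupp).
- exact: measurable_Ccyl.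
- move=> y Cy; exact: (Gsig_const he hw Cy Cx).
Qed.

Lemma sum_cyl k (x : R) (F : k.-tuple bool -> R[i]) : cantor x ->
  exists t : k.-tuple bool, Ccyl t x /\
    \sum_(s : k.-tuple bool) F s * \1_(Ccyl s) x = F t.
Proof.
move=> Cx; have [t Ct] := cantor_cover k Cx; exists t; split => //.
rewrite (bigD1 t) //= big1 ?addr0; first by rewrite indicE mem_set // mulr1.
move=> s nst; rewrite indicE memNset ?mulr0 // => Cs; apply: (negP nst); apply/eqP.
by apply: val_inj; apply: (Ccyl_disj _ Cs Ct); rewrite !size_tuple.
Qed.

Lemma part1_pt m (f : R -> R[i]) (e : nat -> R -> R[i]) :
  (forall n, is_condexp mu (Gsig n) f (e n)) ->
  forall x, cantor x -> Kop mu m f x = \sum_(k < m.+1) ((2^-1 : R) ^+ k)%:C * e k x.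
Proof.
move=> he x Cx; rewrite /Kop; apply: eq_bigr => k _.
have [t [Ct ->]] := sum_cyl (fun s : k.-tuple bool => inner mu (\1_(Ccyl s)) f) Cx.
rewrite cint_indic -(condexp_cyl (he k)) ?size_tuple //.
by rewrite (cint_Gconst (condexp_meas (he k)) _ Ct) ?size_tuple.
Qed.

Lemma part3_core m n (f e1 e0 : R -> R[i]) :
  cmeas measurable f -> cmeas measurable e1 -> cmeas measurable e0 ->
  mu.-integrable setT (fun x => (complex.Re (e1 x))%:E) ->
  mu.-integrable setT (fun x => (complex.Im (e1 x))%:E) ->
  mu.-integrable setT (fun x => (complex.Re (e0 x))%:E) ->
  mu.-integrable setT (fun x => (complex.Im (e0 x))%:E) ->
  (forall w : seq bool, (size w < n)%N -> cint mu (Ccyl w) e1 = cint mu (Ccyl w) e0) ->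
  (forall (w : seq bool) x, (n <= size w)%N -> Ccyl w x ->
     cint mu (Ccyl w) e1 = ((2^-1 : R) ^+ size w)%:C * e1 x) ->
  (forall (w : seq bool) x, (n <= size w)%N -> Ccyl w x ->
     cint mu (Ccyl w) e0 = ((2^-1 : R) ^+ size w)%:C * e0 x) ->
  {ae mu, forall x, f x = e1 x - e0 x} ->
  {ae mu, forall x, Kop mu m f x = (lambda R n m)%:C * f x}.
Proof.
move=> mf m1 m0 i1 i2 i3 i4 hlow h1 h0 hfe.
have mB : cmeas measurable (fun x => e1 x - e0 x).
  have [a1 b1] := cmeas_mfun m1; have [a0 b0] := cmeas_mfun m0.
  apply: mfun_cmeas.
    rewrite (_ : (fun x => _) = (fun x => complex.Re (e1 x) - complex.Re (e0 x))); last first.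
      by apply/funext => x; rewrite ReB.
    exact: measurable_realfun.measurable_funB.
  rewrite (_ : (fun x => _) = (fun x => complex.Im (e1 x) - complex.Im (e0 x))); last first.
    by apply/funext => x; rewrite ImB.
  exact: measurable_realfun.measurable_funB.
have hc (w : seq bool) : cint mu (Ccyl w) f = cint mu (Ccyl w) e1 - cint mu (Ccyl w) e0.
  rewrite -cintB //; last exact: measurable_Ccyl.
  by apply: cint_ae => //; exact: measurable_Ccyl.
apply: (filterS2 _ _ (ae_cantor hself hsupp) hfe) => x Cx fx.
transitivity (\sum_(k < m.+1) ((if (n <= k)%N then (2^-1 : R) ^+ k else 0)%:C * f x)).
  rewrite /Kop; apply: eq_bigr => k _.
  have [t [Ct ->]] := sum_cyl (fun s : k.-tuple bool => inner mu (\1_(Ccyl s)) f) Cx.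
  rewrite cint_indic hc; case: leqP => hk.
    by rewrite (h1 _ x) ?size_tuple // (h0 _ x) ?size_tuple // -mulrBr fx.
  by rewrite hlow ?size_tuple // subrr rmorph0 mul0r.
by rewrite -mulr_suml -rmorph_sum lam_eq.
Qed.

End Core.
Section Final.
Variable R : realType.
Variable mu : probability R R.

Lemma Re_sum (I : Type) (r : seq I) (F : I -> R[i]) :
  complex.Re (\sum_(i <- r) F i) = \sum_(i <- r) complex.Re (F i).
Proof. by elim: r => [|i r IH]; rewrite ?big_nil ?big_cons // ReD IH. Qed.

Lemma Im_sum (I : Type) (r : seq I) (F : I -> R[i]) :
  complex.Im (\sum_(i <- r) F i) = \sum_(i <- r) complex.Im (F i).
Proof. by elim: r => [|i r IH]; rewrite ?big_nil ?big_cons // ImD IH. Qed.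

Lemma meas_dsum m (c : forall k : 'I_m.+1, k.-tuple bool -> R) :
  measurable_fun setT (fun x : R => \sum_(k < m.+1) \sum_(t : k.-tuple bool) \1_(Ccyl t) x * c k t).
Proof.
have mk (k : 'I_m.+1) : measurable_fun setT
    (fun x : R => \sum_(t : k.-tuple bool) \1_(Ccyl t) x * c k t).
  have mt (t : k.-tuple bool) : measurable_fun setT (fun x : R => \1_(Ccyl t) x * c k t).
    apply: measurable_realfun.measurable_funM; last exact: measurable_cst.
    apply: measurable_realfun.measurable_indic; exact: measurable_Ccyl.
  exact: (measurable_sum (index_enum _) mt).
exact: (measurable_sum (index_enum _) mk).
Qed.

Lemma Kop_meas m (f : R -> R[i]) : cmeas measurable (Kop mu m f).
Proof.
apply: mfun_cmeas.
  rewrite (_ : (fun x => _) = (fun x => \sum_(k < m.+1) \sum_(t : k.-tuple bool)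
      \1_(Ccyl t) x * complex.Re (inner mu (\1_(Ccyl t)) f))); last first.
    apply/funext => x; rewrite /Kop Re_sum; apply: eq_bigr => k _.
    rewrite Re_sum; apply: eq_bigr => t _.
    by rewrite indicC mulrC Re_realM.
  exact: (meas_dsum (fun k t => complex.Re (inner mu (\1_(Ccyl t)) f))).
rewrite (_ : (fun x => _) = (fun x => \sum_(k < m.+1) \sum_(t : k.-tuple bool)
    \1_(Ccyl t) x * complex.Im (inner mu (\1_(Ccyl t)) f))); last first.
  apply/funext => x; rewrite /Kop Im_sum; apply: eq_bigr => k _.
  rewrite Im_sum; apply: eq_bigr => t _.
  by rewrite indicC mulrC Im_realM.
exact: (meas_dsum (fun k t => complex.Im (inner mu (\1_(Ccyl t)) f))).
Qed.

Lemma integrable_aeq (h h' : R -> R) :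
  mu.-integrable setT (fun x => (h x)%:E) -> measurable_fun setT h' ->
  {ae mu, forall x, h' x = h x} -> mu.-integrable setT (fun x => (h' x)%:E).
Proof.
move=> /integrableP [mh ih] mh' hae; apply/integrableP; split.
  exact/measurable_realfun.measurable_EFinP.
have mh0 : measurable_fun setT h by apply/measurable_realfun.measurable_EFinP.
rewrite (@ae_eq_integral _ _ _ mu setT (fun x => `|(h x)%:E|%E)) //.
- have -> : (fun x => `|(h' x)%:E|%E) = EFin \o (fun x => `|h' x|).
    by apply/funext => x.
  apply/measurable_realfun.measurable_EFinP.
  exact: (measurableT_comp (@measurable_realfun.normr_measurable R setT) mh').
- have -> : (fun x => `|(h x)%:E|%E) = EFin \o (fun x => `|h x|).
    by apply/funext => x.
  apply/measurable_realfun.measurable_EFinP.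
  exact: (measurableT_comp (@measurable_realfun.normr_measurable R setT) mh0).
- by apply: filterS hae => x /= ->.
Qed.

Lemma cmeas_scale (G : set (set R)) (l : R) (e : R -> R[i]) :
  cmeas G e -> cmeas G (fun x => l%:C * e x).
Proof.
move=> he B mB.
have mB' : measurable ((fun y : R => l * y) @^-1` B).
  have := (measurable_realfun.measurable_funM (measurable_cst l) (@measurable_id _ _ setT)) measurableT B mB.
  by rewrite setTI.
have [h1 h2] := he _ mB'.
split.
  rewrite (_ : (fun x => _) = (fun x => l * complex.Re (e x))) //.
  by apply/funext => x; rewrite Re_realM.
rewrite (_ : (fun x => _) = (fun x => l * complex.Im (e x))) //.
by apply/funext => x; rewrite Im_realM.
Qed.

Lemma int_scale (l : R) (h : R -> R) :
  mu.-integrable setT (fun x => (h x)%:E) -> mu.-integrable setT (fun x => (l * h x)%:E).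
Proof.
move=> ih; have := integrableZl measurableT l ih.
by apply: eq_integrable => // x _; rewrite EFinM.
Qed.

Lemma L2_scale (l : R) (g : R -> R[i]) : L2 mu g -> L2 mu (fun x => l%:C * g x).
Proof.
move=> [hm hi]; split; first exact: cmeas_scale.
have := int_scale (l ^+ 2) hi.
by apply: eq_integrable => // x _; rewrite Re_realM Im_realM; congr (_%:E); ring.
Qed.

Lemma condexp_scale (G : set (set R)) (l : R) (g e : R -> R[i]) :
  G `<=` measurable -> L2 mu g -> is_condexp mu G g e ->
  is_condexp mu G (fun x => l%:C * g x) (fun x => l%:C * e x).
Proof.
move=> Gm hg [he i1 i2 hA]; have [j1 j2] := L2_int hg; split.
- exact: cmeas_scale.
- have := int_scale l i1; apply: eq_integrable => // x _; by rewrite Re_realM.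
- have := int_scale l i2; apply: eq_integrable => // x _; by rewrite Im_realM.
- move=> A GA; have mA := Gm _ GA.
  by rewrite !cintZ // hA.
Qed.

Lemma Gsig_sub n : @Gsig R n `<=` measurable.
Proof. by move=> A; apply: Gsig_meas. Qed.

Lemma Gpre_indic (G : set (set R)) (A : set R) (a : R) (B : set R) :
  sigma_algebra setT G -> G A -> G ((fun x => \1_A x * a) @^-1` B).
Proof.
move=> hG GA.
have pe : (fun x => \1_A x * a) @^-1` B = [set x | if x \in A then B a else B 0].
  by apply/seteqP; split => x /=; rewrite indicE; case: (x \in A); rewrite ?mul1r ?mul0r.
rewrite pe; case: (pselect (B a)) => ha; case: (pselect (B 0)) => h0.
- have -> : [set x | if x \in A then B a else B 0] = setT.
    by apply/seteqP; split => x //= _; case: (x \in A).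
  exact: sigma_setT.
- have -> : [set x | if x \in A then B a else B 0] = A; last by [].
  apply/seteqP; split => x /=.
    by case: (boolP (x \in A)) => [/set_mem //|_ /h0].
  by move=> Ax; rewrite mem_set.
- have -> : [set x | if x \in A then B a else B 0] = ~` A.
    apply/seteqP; split => x /=.
      by case: (boolP (x \in A)) => [_ /ha //|/negP xA _ Ax]; apply: xA; rewrite mem_set.
    by move=> nAx; rewrite memNset.
  exact: sigma_setC.
- have -> : [set x | if x \in A then B a else B 0] = set0.
    by apply/seteqP; split => x //=; case: (x \in A).
  by case: hG.
Qed.

End Final.
Lemma prop_main (R : realType) (mu : probability R R)
  (hself : self_similar mu) (hsupp : mu [set x : R | 0 <= x <= 1] = 1%E)
  (m : nat) :
  (forall (f : R -> R[i]) (e : nat -> R -> R[i]),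
     L2 mu f -> (forall n, is_condexp mu (Gsig n) f (e n)) ->
     {ae mu, forall x,
       Kop mu m f x =
         Complex (2 - 2 ^- m) 0 * e 0%N x
         + \sum_(1 <= n < m.+1)
             Complex (2 ^- n.-1 * (1 - 2 ^- (m - n).+1)) 0 * (e n x - e n.-1 x)})
  /\ (forall f : R -> R[i],
        inD mu 0 f <-> L2 mu f /\ exists c : R[i], {ae mu, forall x, f x = c * phi x})
  /\ (forall (n : nat) (f : R -> R[i]), inD mu n f ->
        inD mu n (Kop mu m f) /\
        {ae mu, forall x, Kop mu m f x = Complex (lambda R n m) 0 * f x}).
Proof.
split.
  move=> f e hf he.
  apply: filterS (ae_cantor hself hsupp) => x Cx.
  rewrite (@part1_pt R mu hself hsupp m f e he x Cx) (main_identity m (fun k => e k x)).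
  congr (_ + _).
  apply: eq_big_nat => n /andP[h1 h2]; congr (_ * _).
  case: n h1 h2 => [//|n] _ h2.
  by rewrite /lambda /= -ltnS h2.
split.
  move=> f; split.
    move=> [hf [g [hg [e1 [e0 [he1 hfe]]]]]]; split => //.
    exists (e1 0).
    apply: (filterS2 _ _ (ae_cantor hself hsupp) hfe) => x Cx fx.
    rewrite fx /phi indicE mem_set //= mulr1.
    apply: (Gsig_const (condexp_meas he1) (s := [::])) => //; rewrite Ccyl_nil //.
    exact: cantor0.
  move=> [hf [c hc]]; split => //; exists f; split => //.
  exists (fun x => c * phi x), (fun x => c * phi x); split; last exact: hc.
  have phiE x : c * phi x = (\1_(@cantor R) x : R)%:C * c by rewrite /phi indicC mulrC.
  have hRe : (fun x => complex.Re (c * phi x)) = (fun x => \1_(@cantor R) x * complex.Re c).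
    by apply/funext => x; rewrite phiE Re_realM.
  have hIm : (fun x => complex.Im (c * phi x)) = (fun x => \1_(@cantor R) x * complex.Im c).
    by apply/funext => x; rewrite phiE Im_realM.
  have G0 : Gsig 0 (@cantor R) by rewrite -Ccyl_nil; apply: Gsig_cyl.
  have mphi : cmeas (Gsig 0) (fun x => c * phi x).
    move=> B mB; rewrite hRe hIm.
    by split; apply: (Gpre_indic _ _ (Gsig_sigma R 0) G0).
  split.
  - exact: mphi.
  - have := integrableZl measurableT (complex.Re c) (integrable_indic mu (@measurable_cantor R)).
    by apply: eq_integrable => // x _; rewrite phiE Re_realM -EFinM mulrC.
  - have := integrableZl measurableT (complex.Im c) (integrable_indic mu (@measurable_cantor R)).
    by apply: eq_integrable => // x _; rewrite phiE Im_realM -EFinM mulrC.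
  - move=> A GA; apply: cint_ae.
    + exact: Gsig_meas GA.
    + exact: cmeas_Gsig mphi.
    + exact: hf.1.
    + by apply: filterS hc => x ->.
move=> n f [hf [g [hg [e1 [e0 [he1 hrest]]]]]].
have hfm := hf.1.
have m1 := cmeas_Gsig (condexp_meas he1).
have [i1 i2] : mu.-integrable setT (fun x => (complex.Re (e1 x))%:E) /\
    mu.-integrable setT (fun x => (complex.Im (e1 x))%:E) by case: he1.
have key : {ae mu, forall x, Kop mu m f x = (lambda R n m)%:C * f x}.
  case: n he1 hrest m1 i1 i2 => [|n] he1 hrest m1 i1 i2.
  - apply: (@part3_core R mu hself hsupp m 0 f e1 (fun=> 0)) => //.
    + by apply: mfun_cmeas; exact: measurable_cst.
    + exact: (finite_measure_integrable_cst mu 0 measurableT).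
    + exact: (finite_measure_integrable_cst mu 0 measurableT).
    + by move=> w x hw Cx; exact: (cint_Gconst hself hsupp (condexp_meas he1) hw Cx).
    + move=> w x _ _; rewrite mulr0 /cint /=.
      by rewrite !Rintegral_cst ?mul0r //; exact: measurable_Ccyl.
    + by apply: filterS hrest => x ->; rewrite subr0.
  - case: hrest => he0 hae.
    apply: (@part3_core R mu hself hsupp m n.+1 f e1 e0) => //.
    + exact: cmeas_Gsig (condexp_meas he0).
    + by case: he0.
    + by case: he0.
    + move=> w hw; rewrite (condexp_cyl he1) ?(condexp_cyl he0) //; exact: ltnW.
    + by move=> w x hw Cx; exact: (cint_Gconst hself hsupp (condexp_meas he1) hw Cx).
    + move=> w x hw Cx; apply: (cint_Gconst hself hsupp (condexp_meas he0) _ Cx).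
      exact: ltnW.
split; last exact: key.
split.
  split; first exact: Kop_meas.
  have [_ hi] := L2_scale (lambda R n m) hf.
  apply: (integrable_aeq hi).
    have [a b] := cmeas_mfun (Kop_meas mu m f).
    by apply: measurable_realfun.measurable_funD; apply: measurable_realfun.measurable_funX.
  by apply: filterS key => x /= ->.
exists (fun x => (lambda R n m)%:C * g x); split; first exact: L2_scale.
exists (fun x => (lambda R n m)%:C * e1 x), (fun x => (lambda R n m)%:C * e0 x).
split; first exact: (condexp_scale _ (@Gsig_sub R n) hg he1).
case: n he1 hrest key {m1 i1 i2} => [|n] he1 hrest key /=.
  by apply: (filterS2 _ _ key hrest) => x -> ->.
case: hrest => he0 hae; split; first exact: (condexp_scale _ (@Gsig_sub R n) hg he0).
by apply: (filterS2 _ _ key hae) => x -> ->; rewrite mulrBr.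
Qed.

Local Close Scope complex_scope.

Theorem proposition3p4 (R : realType) (mu : probability R R)
  (hself : self_similar mu) (hsupp : mu [set x : R | 0 <= x <= 1] = 1%E)
  (m : nat) :
  (forall (f : R -> R[i]) (e : nat -> R -> R[i]),
     L2 mu f -> (forall n, is_condexp mu (Gsig n) f (e n)) ->
     {ae mu, forall x,
       Kop mu m f x =
         Complex (2 - 2 ^- m) 0 * e 0%N x
         + \sum_(1 <= n < m.+1)
             Complex (2 ^- n.-1 * (1 - 2 ^- (m - n).+1)) 0 * (e n x - e n.-1 x)})
  /\ (forall f : R -> R[i],
        inD mu 0 f <-> L2 mu f /\ exists c : R[i], {ae mu, forall x, f x = c * phi x})
  /\ (forall (n : nat) (f : R -> R[i]), inD mu n f ->
        inD mu n (Kop mu m f) /\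
        {ae mu, forall x, Kop mu m f x = Complex (lambda R n m) 0 * f x}).
Proof. exact: prop_main. Qed.
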